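(* Let $n\geq 2$ and let $L_n$ be the graph of linear $[n]$-phenylene (defined in the context). Then the base polynomial counting distances between pairs of degree-3 vertices of $L_n$ is \begin{eqnarray*} H^{3,3}_{b}(L_{n}) &=& 4(n-1)x+6\sum_{k=2}^{n-1}(n-k)x^{3k-2}+2\sum_{k=1}^{n-1}(2n-2k-1)x^{3k-1}\\&&+6\sum_{k=1}^{n-2}(n-k-1)x^{3k}. \end{eqnarray*}
   Context: All graphs are finite, simple and connected; $d(u,v)$ denotes the shortest-path distance and $d_u$ the degree of a vertex $u$. For a graph $G$ and a degree $p$, the base polynomial is $H^{p,p}_{b}(G)=\sum x^{d(u,v)}$, where the sum runs over all unordered pairs $\{u,v\}$ of distinct vertices of $G$ both of degree $p$. Linear $[n]$-phenylene $L_n$: take $n$ hexagons $H_1,\dots,H_n$; hexagon $H_i$ is the 6-cycle $a_i b_i c_i d_i e_i f_i a_i$. For each $i=1,\dots,n-1$ add the two edges $b_i f_{i+1}$ and $c_i e_{i+1}$, so that $b_i c_i e_{i+1} f_{i+1}$ is a 4-cycle joining consecutive hexagons. Thus $L_n$ has $6n$ vertices, $2n+4$ of degree 2 and $4n-4$ of degree 3. *)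

(* Defs.v *)
From HB Require Import structures.
From mathcomp Require Import all_boot all_order all_algebra.
Set Implicit Arguments. Unset Strict Implicit. Unset Printing Implicit Defensive.
Import GRing.Theory.
Local Open Scope ring_scope.

Section GraphDefs.
Variables (T : finType) (e : rel T).

Definition deg (u : T) : nat := #|[set y | e u y]|.

Definition ball (u : T) (k : nat) : {set T} :=
  iter k (fun S : {set T} => S :|: [set y | [exists x in S, e x y]]) [set u].

(* shortest-path distance: least k with v within k steps of u
   (all distances in a connected graph are < #|T|) *)
Definition dist (u v : T) : nat :=
  find (fun k => v \in ball u k) (iota 0 #|T|).

(* H^{p,p}_b(G): sum over unordered pairs {u,v}, u <> v, of degree p each,
   of x^{d(u,v)}; unordered pairs are enumerated once via enum_rank u < enum_rank v *)
Definition Hb (p : nat) : {poly int} :=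
  \sum_(u : T) \sum_(v : T | [&& (enum_rank u < enum_rank v)%N,
                               deg u == p & deg v == p]) 'X^(dist u v).
End GraphDefs.

(* Linear [n]-phenylene: vertex (i, a) is the a-th vertex of hexagon H_i,
   with a = 0,1,2,3,4,5 standing for a_i,b_i,c_i,d_i,e_i,f_i. *)
Definition phen_vertex (n : nat) := ('I_n * 'I_6)%type.

Definition phen_adj (n : nat) : rel (phen_vertex n) :=
  fun x y =>
    let i := nat_of_ord x.1 in let a := nat_of_ord x.2 in
    let j := nat_of_ord y.1 in let b := nat_of_ord y.2 in
    [|| (i == j) && (((a.+1 %% 6) == b)%N || ((b.+1 %% 6) == a)%N),
        (j == i.+1) && (((a == 1) && (b == 5)) || ((a == 2) && (b == 4)))%N
      | (i == j.+1) && (((b == 1) && (a == 5)) || ((b == 2) && (a == 4)))%N].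

(* Main.v *)
Require Import Defs.
From HB Require Import structures.
From mathcomp Require Import all_boot all_order all_algebra.
From mathcomp Require Import zify ring.
Import GRing.Theory.
Set Implicit Arguments. Unset Strict Implicit.

Section Gen.
Variables (T : finType) (e : rel T) (u : T) (f : T -> nat).
Hypothesis f0 : forall y, (f y == 0) = (y == u).
Hypothesis fL : forall x y, e x y -> f y <= (f x).+1.
Hypothesis fP : forall y, y != u -> exists z, e z y && ((f z).+1 == f y).

Lemma ballE k : ball e u k = [set y | f y <= k].
Proof.
elim: k => [|k IH].
  by apply/setP=> y; rewrite /ball /= !inE leqn0 f0.
rewrite /ball iterS -/(ball e u k) IH; apply/setP=> y; rewrite !inE.
apply/idP/idP.
  case/orP=> [H|/existsP[x /andP[]]]; first by rewrite (leq_trans H).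
  by rewrite inE => Hx /fL Hy; rewrite (leq_trans Hy).
rewrite leq_eqVlt ltnS orbC; case/orP=> [->//|/eqP Hy].
have yu : y != u by rewrite -f0 Hy.
case: (@fP y yu) => z /andP[ez /eqP fz]; apply/orP; right; apply/existsP; exists z.
by rewrite inE ez andbT -ltnS fz Hy.
Qed.

Lemma distE v : f v < #|T| -> dist e u v = f v.
Proof.
move=> H; rewrite /dist.
have -> : iota 0 #|T| = iota 0 (f v) ++ iota (f v) (#|T| - f v).
  by rewrite -iotaD subnKC // ltnW.
rewrite find_cat size_iota.
have -> : has (fun k => v \in ball e u k) (iota 0 (f v)) = false.
  apply/negbTE/hasPn => k; rewrite mem_iota add0n => /andP[_ Hk].
  by rewrite ballE inE -ltnNge.
case E: (#|T| - f v) => [|m]; first by lia.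
by rewrite /= ballE inE leqnn addn0.
Qed.
End Gen.

Definition off (a : nat) : nat :=
  match a with 0 => 1 | 1 => 2 | 2 => 2 | 3 => 1 | _ => 0 end.
Definition row (a : nat) : bool := (2 <= a <= 4).
Definition code (r : nat) (b : bool) : nat :=
  match r, b with 0, false => 5 | 0, true => 4 | 1, false => 0 | 1, true => 3
  | 2, false => 1 | _, _ => 2 end.
Definition absd (a b : nat) := (a - b) + (b - a).

Section Phen.
Variable n : nat.
Definition enc (p : phen_vertex n.+1) : nat * bool := (3 * p.1 + off p.2, row p.2).
Definition dec (c : nat * bool) : phen_vertex n.+1 :=
  (inord (c.1 %/ 3), inord (code (c.1 %% 3) c.2)).

Lemma enc_lt p : (enc p).1 < 3 * n.+1.
Proof. case: p => [[i Hi] [a Ha]] /=. have : off a <= 2 by case: a Ha => [|[|[|[|[|[|]]]]]]. lia. Qed.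

Lemma encK p : dec (enc p) = p.
Proof.
case: p => [[i Hi] [a Ha]]; rewrite /dec /enc /=.
have o2 : off a <= 2 by case: a Ha => [|[|[|[|[|[|]]]]]].
have -> : (3 * i + off a) %/ 3 = i by lia.
have -> : (3 * i + off a) %% 3 = off a by lia.
congr pair; apply/val_inj; rewrite /= inordK //.
by case: a Ha {o2} => [|[|[|[|[|[|]]]]]].
by case: a Ha {o2} => [|[|[|[|[|[|]]]]]].
Qed.

Lemma decK c : c.1 < 3 * n.+1 -> enc (dec c) = c.
Proof.
case: c => x r /= Hx; rewrite /enc /dec /=.
have H3 : x %% 3 < 3 by lia.
have Hc : code (x %% 3) r < 6 by case: (x %% 3) H3 => [|[|[|]]] //; case: r.
rewrite !inordK //; last by lia.
case E: (x %% 3) H3 => [|[|[|]]] // _; case: r {Hc} => /=; congr pair; lia.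
Qed.

Lemma enc_inj : injective enc.
Proof. by move=> p q H; rewrite -(encK p) H encK. Qed.

Definition ladj (c d : nat * bool) : bool :=
  ((c.2 == d.2) && (absd c.1 d.1 == 1)) || [&& c.2 != d.2, c.1 == d.1 & c.1 %% 3 != 1].

Lemma adjE p q : phen_adj p q = ladj (enc p) (enc q).
Proof.
case: p q => [[i Hi] [a Ha]] [[j Hj] [b Hb]]; rewrite /phen_adj /ladj /enc /absd /=.
case: a Ha => [|[|[|[|[|[|]]]]]] // _; case: b Hb => [|[|[|[|[|[|]]]]]] // _ /=;
 apply/idP/idP; lia.
Qed.
End Phen.

Definition Dl (c d : nat * bool) : nat :=
  absd c.1 d.1 + (c.2 != d.2) + 2 * [&& c.2 != d.2, c.1 == d.1 & c.1 %% 3 == 1].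

Lemma Dl_eq0 c d : (Dl c d == 0) = (d == c).
Proof. case: c d => [x r] [y s]; rewrite /Dl /absd /= xpair_eqE; case: r; case: s => /=; lia. Qed.

Lemma Dl_lip c y z : ladj y z -> Dl c z <= (Dl c y).+1.
Proof. case: c y z => [x r] [y s] [z t]; rewrite /ladj /Dl /absd /=; case: r; case: s; case: t => /=; lia. Qed.

Lemma Dl_sym c d : Dl c d = Dl d c.
Proof. case: c d => [x r] [y s]; rewrite /Dl /absd /=; case: r; case: s => /=; lia. Qed.

Lemma Dl_pred N c y : 3 %| N -> c.1 < N -> y.1 < N -> y != c ->
  exists z, [&& z.1 < N, ladj z y & (Dl c z).+1 == Dl c y].
Proof.
case: c y => [x r] [y s] /= /dvdnP[q ->] Hx Hy.
rewrite xpair_eqE negb_and => Hne.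
rewrite /ladj /Dl /absd /=.
have [Esr|rs] := eqVneq s r.
  subst r.
  case: (ltngtP x y) Hne => Hxy Hne; last by subst; move: Hne; rewrite !eqxx.
    by exists (y.-1, s) => /=; case: s Hne => /=; lia.
  by exists (y.+1, s) => /=; case: s Hne => /=; lia.
case: (ltngtP x y) => Hxy.
- case E: (y %% 3 == 1).
    by exists (y.-1, s) => /=; move: rs Hne; case: r; case: s => /=; lia.
  by exists (y, r) => /=; move: rs Hne; case: r; case: s => /=; lia.
- case E: (y %% 3 == 1).
    by exists (y.+1, s) => /=; move: rs Hne; case: r; case: s => /=; lia.
  by exists (y, r) => /=; move: rs Hne; case: r; case: s => /=; lia.
- subst y. case E: (x %% 3 == 1).
    by exists (x.+1, s) => /=; move: rs Hne; case: r; case: s => /=; lia.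
  by exists (x, r) => /=; move: rs Hne; case: r; case: s => /=; lia.
Qed.

Section PD.
Variable n : nat.
Local Notation V := (phen_vertex n.+1).
Local Notation N := (3 * n.+1).

Lemma distP (u v : V) : Defs.dist (@phen_adj n.+1) u v = Dl (enc u) (enc v).
Proof.
apply: (@distE _ _ u (fun y => Dl (enc u) (enc y))).
- by move=> y; rewrite Dl_eq0 (inj_eq (@enc_inj n)).
- by move=> x y; rewrite adjE; apply: Dl_lip.
- move=> y yu.
  have : enc y != enc u by rewrite (inj_eq (@enc_inj n)).
  case/(Dl_pred (dvdn_mulr _ (dvdnn 3)) (enc_lt u) (enc_lt y)) => z /and3P[zN ez Hz].
  by exists (dec n z); rewrite adjE decK // ez.
- rewrite card_prod !card_ord.
  have := enc_lt u; have := enc_lt v.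
  case: (enc u) => x r; case: (enc v) => y s; rewrite /Dl /absd /=; case: r; case: s => /=; lia.
Qed.

Definition nbrs (c : nat * bool) :=
  [seq d <- [:: (c.1.-1, c.2); (c.1.+1, c.2); (c.1, ~~ c.2)] | ladj c d && (d.1 < N)].

Definition dg3 (c : nat * bool) := [&& c.1 %% 3 != 1, 0 < c.1 & c.1.+1 < N].

Lemma nbrs_uniq c : uniq (nbrs c).
Proof.
apply: filter_uniq; case: c => x r; rewrite /= !inE !xpair_eqE andbT.
case: r => /=; lia.
Qed.

Lemma nbrsE (u : V) : [set y | phen_adj u y] =i map (dec n) (nbrs (enc u)).
Proof.
move=> y; rewrite inE adjE.
have Hy := enc_lt y; have Hu := enc_lt u.
apply/idP/mapP.
  move=> H; exists (enc y); last by rewrite encK.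
  rewrite /nbrs mem_filter H Hy andTb.
  move: H Hu Hy; case: (enc u) => x r; case: (enc y) => z t.
  rewrite /ladj /absd !inE !xpair_eqE /=; case: r; case: t => /=; lia.
case=> d; rewrite mem_filter => /andP[/andP[H1 H2] _] ->.
by rewrite decK.
Qed.

Lemma degE (u : V) : (deg (@phen_adj n.+1) u == 3) = dg3 (enc u).
Proof.
rewrite /deg (eq_card (nbrsE u)).

have U : uniq (map (dec n) (nbrs (enc u))).
  rewrite map_inj_in_uniq ?nbrs_uniq //.
  move=> d1 d2; rewrite !mem_filter => /andP[/andP[_ h1] _] /andP[/andP[_ h2] _] E.
  by rewrite -(decK h1) -(decK h2) E.
rewrite (card_uniqP U) size_map /nbrs size_filter.
have := enc_lt u; case: (enc u) => x r /=; rewrite /ladj /absd /dg3 /=.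
case: r => /=; lia.
Qed.
End PD.

Local Open Scope ring_scope.

Definition wt (s t : nat) : nat :=
  match s, t with
  | 0, 0 => 1 | 0, 1 => 2 | 0, 2 => 2 | 0, _ => 3
  | 1, 0 => 2 | 1, 1 => 1 | 1, 2 => 3 | 1, _ => 2
  | 2, 0 => 0 | 2, 1 => 1 | 2, 2 => 1 | 2, _ => 2
  | _, 0 => 1 | _, 1 => 0 | _, 2 => 2 | _, _ => 1 end.
Definition w0 (s t : nat) : nat :=
  match s, t with
  | 0, 0 => 0 | 0, 1 => 1 | 0, 2 => 1 | 0, _ => 2
  | 1, 0 => 1 | 1, 1 => 0 | 1, 2 => 2 | 1, _ => 1
  | 2, 0 => 1 | 2, 1 => 2 | 2, 2 => 0 | 2, _ => 1
  | _, 0 => 2 | _, 1 => 1 | _, 2 => 1 | _, _ => 0 end.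

Definition ex (k l s t : nat) : nat :=
  (absd (3 * k + s %/ 2) (3 * l + t %/ 2) + (odd s != odd t))%N.

Lemma ex_lt k l s t : (k < l)%N -> (s < 4)%N -> (t < 4)%N ->
  ex k l s t = ((3 * (l - k)).-1 + wt s t)%N.
Proof.
move=> kl; rewrite /ex /absd.
case: s => [|[|[|[|]]]] // _; case: t => [|[|[|[|]]]] // _ /=; lia.
Qed.

Lemma ex_eq k s t : (s < 4)%N -> (t < 4)%N -> ex k k s t = w0 s t.
Proof.
rewrite /ex /absd.
case: s => [|[|[|[|]]]] // _; case: t => [|[|[|[|]]]] // _ /=; lia.
Qed.

Lemma ex_sym k l s t : ex k l s t = ex l k t s.
Proof. rewrite /ex /absd; case: (odd s); case: (odd t) => /=; lia. Qed.

Definition Q : {poly int} := 2%:R + 6%:R * 'X + 6%:R * 'X^2 + 2%:R * 'X^3.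
Definition A0 : {poly int} := 4%:R * 'X + 2%:R * 'X^2.
Definition G (d : nat) : {poly int} := 'X^((3 * d).-1) * Q.

Definition Fb (k l : nat) : {poly int} :=
  \sum_(s < 4) \sum_(t < 4) (if (k != l) || (s != t :> nat) then 'X^(ex k l s t) else 0).

Lemma Fb_lt k l : (k < l)%N -> Fb k l = G (l - k).
Proof.
move=> kl; rewrite /Fb /G.
have -> : (k != l) = true by lia.
under eq_bigr => s _ do under eq_bigr => t _ do rewrite /= ex_lt // exprD.
rewrite -[in RHS](_ : \sum_(s < 4) \sum_(t < 4) 'X^(wt s t) = Q).
  by rewrite big_distrr /=; apply: eq_bigr => s _; rewrite big_distrr.
rewrite !big_ord_recr /= !big_ord0 /Q; ring.
Qed.

Lemma Fb_sym k l : Fb k l = Fb l k.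
Proof.
rewrite /Fb exchange_big; apply: eq_bigr => s _; apply: eq_bigr => t _.
by rewrite eq_sym [(t == s :> nat)]eq_sym ex_sym.
Qed.

Lemma Fb_eq k : Fb k k = A0 *+ 2.
Proof.
rewrite /Fb eqxx /=.
under eq_bigr => s _ do under eq_bigr => t _ do rewrite ex_eq //.
rewrite !big_ord_recr /= !big_ord0 /A0; ring.
Qed.

Definition T (m : nat) : {poly int} := m%:R * A0 + \sum_(1 <= d < m) (m - d)%:R * G d.

Lemma aux m : \sum_(1 <= d < m.+1) (m.+1 - d)%:R * G d =
  \sum_(1 <= d < m) (m - d)%:R * G d + \sum_(1 <= d < m.+1) G d.
Proof.
case: m => [|m]; first by rewrite !big_geq // addr0.
have E : \sum_(1 <= d < m.+1) (m.+1 - d)%:R * G d = \sum_(1 <= d < m.+2) (m.+1 - d)%:R * G d.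
  by rewrite [in RHS]big_nat_recr //= subnn mul0r addr0.
rewrite E -big_split /=; apply: eq_big_nat => d /andP[d1 dm].
rewrite (_ : (m.+2 - d = (m.+1 - d).+1)%N); last by lia.
by rewrite -natr1 mulrDl mul1r.
Qed.

Lemma S_rec m : \sum_(0 <= k < m) \sum_(0 <= l < m) Fb k l = T m *+ 2.
Proof.
elim: m => [|m IH]; first by rewrite big_geq // /T big_geq // mul0r addr0 mul0rn.
rewrite big_nat_recr //=.
rewrite (@eq_big_nat _ _ _ 0 m _ (fun k => \sum_(0 <= l < m) Fb k l + G (m - k))); last first.
  by move=> k /andP[_ km]; rewrite big_nat_recr //= Fb_lt.
rewrite big_split /= IH big_nat_recr //= Fb_eq.
rewrite (@eq_big_nat _ _ _ 0 m (fun l => Fb m l) (fun l => G (m - l))); last first.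
  by move=> l /andP[_ lm]; rewrite Fb_sym Fb_lt.
have R : \sum_(0 <= k < m) G (m - k) = \sum_(1 <= d < m.+1) G d.
  rewrite big_nat_rev /= big_add1 /=; apply: eq_big_nat => k /andP[_ km].
  by congr G; lia.
rewrite R /T aux -natr1; ring.
Qed.

Lemma RHS_T m : (0 < m)%N ->
  (4 * (m.+1 - 1))%N%:R * 'X
  + \sum_(2 <= k < m.+1) (6 * (m.+1 - k))%N%:R * 'X^(3 * k - 2)
  + \sum_(1 <= k < m.+1) (2 * (2 * m.+1 - 2 * k - 1))%N%:R * 'X^(3 * k - 1)
  + \sum_(1 <= k < m.+1 - 1) (6 * (m.+1 - k - 1))%N%:R * 'X^(3 * k) = T m :> {poly int}.
Proof.
move=> m0.
set S1 := \sum_(1 <= d < m) (2 * (m - d))%N%:R * 'X^(3 * d - 1) : {poly int}.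
set S2 := \sum_(1 <= d < m) (6 * (m - d))%N%:R * 'X^(3 * d) : {poly int}.
set S3 := \sum_(1 <= d < m) (6 * (m - d))%N%:R * 'X^(3 * d + 1) : {poly int}.
set S4 := \sum_(1 <= d < m) (2 * (m - d))%N%:R * 'X^(3 * d + 2) : {poly int}.
have ET : T m = m%:R * A0 + (S1 + S2 + S3 + S4).
  rewrite /T /S1 /S2 /S3 /S4; congr (_ + _); rewrite -!big_split.
  apply: eq_big_nat => d /andP[d1 dm]; rewrite /G /=.
  set e := (3 * d).-1.
  have E1 : (3 * d - 1 = e)%N by rewrite /e; lia.
  have E3 : (3 * d + 1 = e.+2)%N by rewrite /e; lia.
  have E4 : (3 * d + 2 = e.+3)%N by rewrite /e; lia.
  have E2 : (3 * d = e.+1)%N by rewrite /e; lia.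
  rewrite E1 E3 E4 E2 !exprSr !natrM /Q; ring.
have Ea : \sum_(1 <= k < m.+1 - 1) (6 * (m.+1 - k - 1))%N%:R * 'X^(3 * k) = S2.
  rewrite subSS subn0; apply: eq_big_nat => k _; congr (_%:R * _); lia.
have Eb : \sum_(2 <= k < m.+1) (6 * (m.+1 - k))%N%:R * 'X^(3 * k - 2) = S3.
  rewrite big_add1 /=; apply: eq_big_nat => k _; congr (_%:R * 'X^_); lia.
have Ec : \sum_(1 <= k < m.+1) (2 * (2 * m.+1 - 2 * k - 1))%N%:R * 'X^(3 * k - 1)
    = S1 + ((2 * m)%N%:R * 'X^2 + S4).
  transitivity (\sum_(1 <= k < m.+1) ((2 * (m - k))%N%:R * 'X^(3 * k - 1)
                 + (2 * (m.+1 - k))%N%:R * 'X^(3 * k - 1)) : {poly int}).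
    apply: eq_big_nat => k /andP[k1 km]; rewrite -mulrDl -natrD; congr (_%:R * _); lia.
  rewrite big_split /=; congr (_ + _).
    by rewrite big_nat_recr //= subnn muln0 mul0r addr0.
  rewrite big_ltn //; congr (_ + _).
    by congr (_%:R * 'X^_); lia.
  rewrite big_add1 /=; apply: eq_big_nat => k _; congr (_%:R * 'X^_); lia.
have E0 : (4 * (m.+1 - 1))%N = (4 * m)%N by lia.
rewrite E0 Ea Eb Ec ET /A0 !natrM; ring.
Qed.

Lemma sym_sum (T : finType) (R : nmodType) (P : T -> T -> bool) (Fn : T -> T -> R) :
  (forall u v, P u v = P v u) -> (forall u v, Fn u v = Fn v u) ->
  (\sum_u \sum_(v | (enum_rank u < enum_rank v)%N && P u v) Fn u v) *+ 2 =
  \sum_u \sum_(v | (u != v) && P u v) Fn u v.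
Proof.
move=> Ps Fs.
have E : forall u, \sum_(v | (u != v) && P u v) Fn u v =
   \sum_(v | (enum_rank u < enum_rank v)%N && P u v) Fn u v +
   \sum_(v | (enum_rank v < enum_rank u)%N && P v u) Fn v u.
  move=> u; rewrite (bigID (fun v => (enum_rank u < enum_rank v)%N)) /=.
  congr (_ + _).
    apply: eq_bigl => v /=.
    have [h|h] := boolP (enum_rank u < enum_rank v)%N; rewrite ?andbT ?andbF //.
    by case: eqP => // uv; move: h; rewrite uv ltnn.
  apply: eq_big => [v|v _]; last by rewrite Fs.
  rewrite Ps; case: ltngtP => h; rewrite ?andbT ?andbF //=.
  - by case: eqP => // uv; move: h; rewrite uv ltnn.
  - apply/negbTE; rewrite negb_and; apply/orP; left; rewrite negbK.
    by apply/eqP/enum_rank_inj/val_inj.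
symmetry; under eq_bigr => u _ do rewrite E.
rewrite big_split /= mulr2n; congr (_ + _).
by rewrite (exchange_big_dep xpredT).
Qed.

Section Main.
Variable n : nat.
Local Notation V := (phen_vertex n.+1).

Definition g (p : 'I_n * 'I_4) : V := dec n (3 * p.1 + 2 + p.2 %/ 2, odd p.2)%N.

Lemma enc_g p : enc (g p) = (3 * p.1 + 2 + p.2 %/ 2, odd p.2)%N.
Proof.
rewrite /g decK //=; case: p => [[k Hk] [s Hs]] /=.
have : (s %/ 2 <= 1)%N by lia.
lia.
Qed.

Lemma g_inj : injective g.
Proof.
move=> [[k Hk] [s Hs]] [[l Hl] [t Ht]] E.
have := congr1 (@enc n) E; rewrite !enc_g /= => [[E1 E2]].
have [kl st] : k = l /\ s = t.
  clear E; move: E1 E2; case: s Hs => [|[|[|[|]]]] // _; case: t Ht => [|[|[|[|]]]] // _ /=; lia.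
subst; congr pair; exact: val_inj.
Qed.

Lemma dg3_g : [set u : V | dg3 n (enc u)] = g @: setT.
Proof.
apply/setP => u; rewrite inE; apply/idP/imsetP.
  have Hu := enc_lt u.
  rewrite -(encK u); move: Hu; case: (enc u) => x r /= Hx.
  rewrite decK // /dg3 /= => /and3P[h1 h2 h3].
  have Hk : ((x - 2) %/ 3 < n)%N by lia.
  have Hs : (2 * ((x - 2) %% 3) + r < 4)%N by case: r; lia.
  exists (Ordinal Hk, Ordinal Hs) => //.
  rewrite /g /=; congr (dec n (_, _)).
    clear Hs; case: r h1 h2 h3 => /= *; lia.
  clear Hs; rewrite oddD oddM /=; by case: r.
case=> p _ ->; rewrite enc_g /dg3 /=.
case: p => [[k Hk] [s Hs]] /=; have : (s %/ 2 <= 1)%N by lia.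
lia.
Qed.

Lemma Dl_g p q : Dl (enc (g p)) (enc (g q)) = ex p.1 q.1 p.2 q.2.
Proof.
rewrite !enc_g /Dl /ex /absd /=; case: p q => [[k Hk][s Hs]] [[l Hl][t Ht]] /=.
have : (s %/ 2 <= 1)%N by lia.
have : (t %/ 2 <= 1)%N by lia.
case: (odd s); case: (odd t) => /=; lia.
Qed.

Lemma Hb2 : (Hb (@phen_adj n.+1) 3) *+ 2 = \sum_(0 <= k < n) \sum_(0 <= l < n) Fb k l.
Proof.
have -> : Hb (@phen_adj n.+1) 3 = \sum_(u : V) \sum_(v : V | (enum_rank u < enum_rank v)%N &&
      (dg3 n (enc u) && dg3 n (enc v))) 'X^(Dl (enc u) (enc v)).
  by apply: eq_bigr => u _; apply: eq_big => [v|v _]; [rewrite !degE | rewrite distP].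
rewrite (@sym_sum _ _ (fun u v => dg3 n (enc u) && dg3 n (enc v))
   (fun u v => 'X^(Dl (enc u) (enc v)))); last first.
- by move=> u v; rewrite Dl_sym.
- by move=> u v; rewrite andbC.
transitivity (\sum_(u : V | dg3 n (enc u)) \sum_(v : V | dg3 n (enc v))
   (if u != v then 'X^(Dl (enc u) (enc v)) else 0 : {poly int})).
  rewrite [RHS]big_mkcond; apply: eq_bigr => u _; case: ifP => Pu /=.
    rewrite [LHS]big_mkcond [RHS]big_mkcond; apply: eq_bigr => v _.
    by case: (u != v); case: (dg3 n (enc v)).
  by rewrite big_pred0 // => v; rewrite andbF.
have Hset : forall u : V, dg3 n (enc u) = (u \in g @: setT) by move=> u; rewrite -dg3_g inE.
rewrite (eq_bigl _ _ Hset) (big_imset _ (in2W g_inj)) /=.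
under eq_bigr => p _ do rewrite (eq_bigl _ _ Hset) (big_imset _ (in2W g_inj)) /=.
rewrite (eq_bigl _ _ (fun p => in_setT p)).
under eq_bigr => p _ do rewrite (eq_bigl _ _ (fun p => in_setT p)).
rewrite big_mkord; under [RHS]eq_bigr => k _ do rewrite big_mkord exchange_big /=.
rewrite [RHS]pair_big; apply: eq_bigr => -[k s] _ /=; rewrite [RHS]pair_big.
apply: eq_bigr => -[l t] _ /=; rewrite (inj_eq g_inj) Dl_g /= xpair_eqE negb_and.
by [].
Qed.

Lemma Hb_T : Hb (@phen_adj n.+1) 3 = T n.
Proof.
have := Hb2; rewrite S_rec => H.
apply/polyP => i; have := congr1 (fun p : {poly int} => p`_i) H.
by rewrite /= !coefMn => /eqP; rewrite Num.Theory.eqrMn2r /= => /eqP.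
Qed.
End Main.

Theorem theorem2p3 (n : nat) (hn : (2 <= n)%N) :
  Hb (@phen_adj n) 3 =
    (4 * (n - 1))%N%:R * 'X
    + \sum_(2 <= k < n) (6 * (n - k))%N%:R * 'X^(3 * k - 2)
    + \sum_(1 <= k < n) (2 * (2 * n - 2 * k - 1))%N%:R * 'X^(3 * k - 1)
    + \sum_(1 <= k < n - 1) (6 * (n - k - 1))%N%:R * 'X^(3 * k).
Proof.
case: n hn => [|n] // hn.
by rewrite Hb_T RHS_T.
Qed.
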